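(* Let $X\subset Y$ be spaces, $\alpha<\omega_1$, and let $\mathcal C$ be a Suslin scheme on $X$ satisfying $\mathcal A(\overline{\mathcal C}^Y)=X$. Then: (i) if $\alpha$ is even, $\mathbf R_\alpha(\mathcal C,Y)\setminus X=\{y\in Y\setminus X: D_{\mathrm{iie}}^{\alpha'}(S_{\mathcal C}(y))\ne\emptyset\}$; (ii) if $\alpha$ is odd, $\mathbf R_\alpha(\mathcal C,Y)\setminus X=\{y\in Y\setminus X: D_{\mathrm{iie}}^{\alpha'}(S_{\mathcal C}(y))\supsetneq\{\emptyset\}\}$; (iii) if $\alpha$ is odd, then for every $i\in\omega$, $\mathbf R_{T^c_{\alpha,i}}(\mathcal C,Y)\setminus X=\{y\in Y\setminus X: D_{\mathrm{iie}}^{\alpha'}(S_{\mathcal C}(y))\cap\omega^i\ne\emptyset\}$.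
   Context: Sequences/trees: $\omega^{<\omega}$ finite sequences, $\omega^i$ those of length $i$, $\sqsubseteq$ extension, a tree is a subset of $\omega^{<\omega}$ closed under initial segments; for $S\subset\omega^{<\omega}$, $\mathrm{cl}_{\mathrm{Tr}}(S)$ is the set of initial segments of elements of $S$; $i^\frown S=\{(i)^\frown s:s\in S\}$. Suslin scheme in $Y$: family $\mathcal C=(C(s))_{s\in\omega^{<\omega}}$ of subsets of $Y$ with $C(t)\subset C(s)$ for $t\sqsupseteq s$; $\mathcal A(\mathcal C)=\bigcup_{\sigma\in\omega^\omega}\bigcap_n C(\sigma|n)$; a Suslin scheme on $X$ is a Suslin scheme in $X$ with $\mathcal A(\mathcal C)\supset X$ (hence $=X$). $\overline{\mathcal C}^Y=(\overline{C(s)\cap Y}^Y)_s$. Admissible maps $\varphi:T\to\omega^{<\omega}$: monotone w.r.t. $\sqsubseteq$ and $|\varphi(t)|=t(0)+\dots+t(k)$. $\mathbf R_T(\mathcal D)=\{x\in D(\emptyset):\exists$ admissible $\varphi:T\to\omega^{<\omega}$, $x\in D(\varphi(t))\ \forall t\in T\}$; $\mathbf R_T(\mathcal C,Y)=\mathbf R_T(\overline{\mathcal C}^Y)$. Trees $T_\beta$: fix bijections $\pi_\beta:\omega\to\beta$ for countable limit $\beta$; $T_0=\{\emptyset\}$, $T_\beta=\{\emptyset\}\cup\bigcup_n n^\frown T_{\beta-1}$ (successor), $T_\beta=\{\emptyset\}\cup\bigcup_n n^\frown T_{\pi_\beta(n)}$ (limit), $T_{\omega_1}=\omega^{<\omega}$.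 Writing $\alpha=\lambda+2n+i$ ($\lambda$ limit or $0$, $n\in\omega$, $i\in\{0,1\}$), $\alpha'=\lambda+n$. Canonical trees: $T^c_\alpha=T_{\alpha'}$ for even $\alpha$; for odd $\alpha$ and $i\in\omega$, $T^c_{\alpha,i}=\{\emptyset\}\cup i^\frown T_{\alpha'}$ and $T^c_\alpha=T^c_{\alpha,1}$. $\mathbf R_\alpha(\mathcal C,Y)=\mathbf R_{T^c_\alpha}(\mathcal C,Y)$. Derivative: for a tree $T$, $D_{\mathrm{iie}}(T)=\{t\in T: T$ contains infinitely many pairwise incomparable extensions of $t$ of pairwise different lengths$\}$; for $S\subset\omega^{<\omega}$, $D^0_{\mathrm{iie}}(S)=\mathrm{cl}_{\mathrm{Tr}}(S)$, $D^{\beta+1}_{\mathrm{iie}}(S)=D_{\mathrm{iie}}(D^\beta_{\mathrm{iie}}(S))$, $D^\lambda_{\mathrm{iie}}(S)=\bigcap_{\beta<\lambda}D^\beta_{\mathrm{iie}}(S)$ for limit $\lambda$. For $y\in Y$, $S_{\mathcal C}(y)=\{s\in\omega^{<\omega}: y\in\overline{C(s)}^Y\}$. *)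

(* Defs.v *)
From mathcomp Require Import all_boot.
Set Implicit Arguments. Unset Strict Implicit. Unset Printing Implicit Defensive.

(* omega^{<omega} = seq nat; s ⊑ t is [prefix s t]; sigma|k is [mkseq sigma k]. *)

Definition clTr (S : seq nat -> Prop) (s : seq nat) : Prop :=
  exists u, S u /\ prefix s u.

Definition Diie (T : seq nat -> Prop) (t : seq nat) : Prop :=
  T t /\
  exists f : nat -> seq nat,
    (forall k, T (f k) /\ prefix t (f k)) /\
    (forall k l, k <> l ->
       ~ prefix (f k) (f l) /\ ~ prefix (f l) (f k) /\ size (f k) <> size (f l)).

Definition admissible (T : seq nat -> Prop) (phi : seq nat -> seq nat) : Prop :=
  (forall t1 t2, T t1 -> T t2 -> prefix t1 t2 -> prefix (phi t1) (phi t2)) /\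
  (forall t, T t -> size (phi t) = sumn t).

Definition is_topology (Y : Type) (open : (Y -> Prop) -> Prop) : Prop :=
  open (fun _ => True) /\
  (forall U V, open U -> open V -> open (fun y => U y /\ V y)) /\
  (forall F : (Y -> Prop) -> Prop, (forall U, F U -> open U) ->
     open (fun y => exists U, F U /\ U y)).

Definition closure (Y : Type) (open : (Y -> Prop) -> Prop) (A : Y -> Prop) (y : Y) : Prop :=
  forall U, open U -> U y -> exists z, U z /\ A z.

Definition suslinA (Y : Type) (D : seq nat -> Y -> Prop) (y : Y) : Prop :=
  exists sigma : nat -> nat, forall k, D (mkseq sigma k) y.

Definition suslin_scheme_on (Y : Type) (X : Y -> Prop) (C : seq nat -> Y -> Prop) : Prop :=
  (forall s y, C s y -> X y) /\
  (forall s t, prefix s t -> forall y, C t y -> C s y) /\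
  (forall x, X x -> suslinA C x).

Definition clScheme (Y : Type) (open : (Y -> Prop) -> Prop) (C : seq nat -> Y -> Prop)
  : seq nat -> Y -> Prop := fun s => closure open (C s).

Definition RT (Y : Type) (open : (Y -> Prop) -> Prop) (C : seq nat -> Y -> Prop)
  (T : seq nat -> Prop) (y : Y) : Prop :=
  clScheme open C [::] y /\
  exists phi, admissible T phi /\ forall t, T t -> clScheme open C (phi t) y.

Definition SC (Y : Type) (open : (Y -> Prop) -> Prop) (C : seq nat -> Y -> Prop) (y : Y)
  : seq nat -> Prop := fun s => closure open (C s) y.

(* An ordinal is represented as an element of a type O carrying a strict well-order lt. *)
Definition is_wellorder (O : Type) (lt : O -> O -> Prop) : Prop :=
  (forall a, ~ lt a a) /\
  (forall a b c, lt a b -> lt b c -> lt a c) /\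
  (forall a b, lt a b \/ a = b \/ lt b a) /\
  well_founded lt.

Definition is_zero (O : Type) (lt : O -> O -> Prop) (b : O) : Prop := forall g, ~ lt g b.
Definition is_succ (O : Type) (lt : O -> O -> Prop) (g b : O) : Prop :=
  lt g b /\ forall d, lt g d -> lt d b -> False.
Definition is_limit (O : Type) (lt : O -> O -> Prop) (b : O) : Prop :=
  ~ is_zero lt b /\ forall g, ~ is_succ lt g b.

Fixpoint iter_succ (O : Type) (lt : O -> O -> Prop) (l : O) (k : nat) (a : O) : Prop :=
  match k with
  | 0 => a = l
  | k'.+1 => exists g, iter_succ lt l k' g /\ is_succ lt g a
  end.

(* the fixed bijections pi_beta : omega -> beta for limit beta
   (their existence forces every element of O to be a countable ordinal) *)
Definition pi_ok (O : Type) (lt : O -> O -> Prop) (pi : O -> nat -> O) : Prop :=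
  forall b, is_limit lt b ->
    (forall n, lt (pi b n) b) /\
    (forall n m, pi b n = pi b m -> n = m) /\
    (forall g, lt g b -> exists n, pi b n = g).

Definition is_T_family (O : Type) (lt : O -> O -> Prop) (pi : O -> nat -> O)
  (Tf : O -> seq nat -> Prop) : Prop :=
  forall b s,
    (is_zero lt b -> (Tf b s <-> s = [::])) /\
    (forall g, is_succ lt g b ->
       (Tf b s <-> s = [::] \/ exists n t, s = n :: t /\ Tf g t)) /\
    (is_limit lt b ->
       (Tf b s <-> s = [::] \/ exists n t, s = n :: t /\ Tf (pi b n) t)).

Definition is_Diie_family (O : Type) (lt : O -> O -> Prop)
  (Df : O -> (seq nat -> Prop) -> seq nat -> Prop) : Prop :=
  forall b S s,
    (is_zero lt b -> (Df b S s <-> clTr S s)) /\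
    (forall g, is_succ lt g b -> (Df b S s <-> Diie (Df g S) s)) /\
    (is_limit lt b -> (Df b S s <-> forall g, lt g b -> Df g S s)).

(* alpha even : T^c_alpha = T_{alpha'} *)
Definition Tc_even (O : Type) (Tf : O -> seq nat -> Prop) (a' : O) : seq nat -> Prop :=
  Tf a'.
(* alpha odd : T^c_{alpha,i} = {emptyset} ∪ i^T_{alpha'};  T^c_alpha = T^c_{alpha,1} *)
Definition Tc_odd (O : Type) (Tf : O -> seq nat -> Prop) (a' : O) (i : nat)
  : seq nat -> Prop :=
  fun s => s = [::] \/ exists t, s = i :: t /\ Tf a' t.

(* Main.v *)
Require Import Defs.
From mathcomp Require Import all_boot.
From Stdlib Require Import Classical ClassicalEpsilon.
Set Implicit Arguments. Unset Strict Implicit. Unset Printing Implicit Defensive.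
Set Implicit Arguments. Unset Strict Implicit. Unset Printing Implicit Defensive.

Lemma choice' (A B : Type) (R : A -> B -> Prop) :
  (forall a, exists b, R a b) -> exists f : A -> B, forall a, R a (f a).
Proof.
move=> H; exists (fun a => proj1_sig (constructive_indefinite_description _ (H a))).
move=> a; exact: proj2_sig (constructive_indefinite_description _ (H a)).
Qed.

Lemma prefix_take_le (u s : seq nat) m : prefix u s -> size u <= m -> prefix u (take m s).
Proof.
move=> /prefixP [s' ->] hm; rewrite take_cat ltnNge hm /=; exact: prefix_prefix.
Qed.

Lemma prefix_nth (a b : seq nat) i x : prefix a b -> i < size a -> nth x a i = nth x b i.
Proof. by move=> /prefixP [s' ->] hi; rewrite nth_cat hi. Qed.

Lemma prefix_child (v w : seq nat) : prefix v w -> size v < size w ->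
  prefix (rcons v (nth 0 w (size v))) w.
Proof.
move=> /prefixP [s' ->]; rewrite size_cat -{1}(addn0 (size v)) ltn_add2l.
case: s' => [|x s''] //= _.
rewrite nth_cat ltnn subnn /= -cats1 prefix_catr //= eqxx /=.
by rewrite eqxx prefix0s.
Qed.

Lemma prefix_same_size (a b w : seq nat) : prefix a w -> prefix b w -> size a = size b -> a = b.
Proof. by rewrite !prefixE => /eqP ha /eqP hb hs; rewrite -ha -hb hs. Qed.

Lemma prefix_size_eq (u w : seq nat) : prefix u w -> size w = size u -> w = u.
Proof. by rewrite prefixE => /eqP h hs; rewrite -hs take_size in h. Qed.

Definition tree (T : seq nat -> Prop) := forall s t, prefix s t -> T t -> T s.
Definition wfT (T : seq nat -> Prop) := forall sigma : nat -> nat, ~ (forall k, T (mkseq sigma k)).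

Lemma Diie_easy T u : tree T -> Diie T u ->
  forall n, exists w, T w /\ prefix u w /\ size w = size u + n.
Proof.
move=> trT [Tu [f [Hf Hd]]] n.
have [k hk]: exists k, size u + n <= size (f k).
  apply: NNPP => hne.
  have hlt : forall k, size (f k) < size u + n.
    by move=> k; rewrite ltnNge; apply/negP => h; apply: hne; exists k.
  pose g (k : 'I_(size u + n).+1) : 'I_(size u + n) := Ordinal (hlt k).
  have ginj : injective g.
    move=> k l /(congr1 val) /= e; apply: val_inj; apply: NNPP => hkl.
    by have [_ [_ ]] := Hd _ _ hkl.
  by have := leq_card g ginj; rewrite !card_ord ltnn.
exists (take (size u + n) (f k)); split; first exact: trT _ _ (prefix_take _ _) (Hf k).1.
split; first exact: prefix_take_le (Hf k).2 (leq_addr _ _).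
by rewrite size_takel.
Qed.

Lemma Diie_hard T u : tree T -> wfT T -> T u ->
  (forall n, exists w, T w /\ prefix u w /\ size u + n <= size w) -> Diie T u.
Proof.
move=> trT WF Tu Hall.
pose H v := T v /\ forall n, exists w, T w /\ prefix v w /\ size v + n <= size w.
have [v [puv [hv hnot]]] : exists v, prefix u v /\ H v /\ forall j, ~ H (rcons v j).
  apply: NNPP => hno.
  have step: forall v, exists j, (prefix u v /\ H v) -> H (rcons v j).
    move=> v; case: (classic (prefix u v /\ H v)) => [[puv hv]|hn]; last by exists 0.
    apply: NNPP => hne; apply: hno; exists v; split=>//; split=>// j hj.
    by apply: hne; exists j.
  have [g hg] := choice' step.
  pose vs := fix vs k := if k is k'.+1 then rcons (vs k') (g (vs k')) else u.
  have hvs : forall k, prefix u (vs k) /\ H (vs k) /\ size (vs k) = size u + k.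
    elim => [|k [p [h s]]] /=.
      by split; [exact: prefix_refl | split; [split | rewrite addn0]].
    have h' := hg (vs k) (conj p h).
    split; first exact: prefix_trans p (prefix_rcons _ _).
    by split => //; rewrite size_rcons s addnS.
  have hmono: forall k m, k <= m -> prefix (vs k) (vs m).
    move=> k m /subnK <-; elim: (m - k) => [|d IH] /=; first by rewrite add0n prefix_refl.
    exact: prefix_trans IH (prefix_rcons _ _).
  pose sigma m := nth 0 (vs m.+1) m.
  apply: (WF sigma) => k.
  have -> : mkseq sigma k = take k (vs k).
    apply: (@eq_from_nth _ 0).
      by rewrite size_mkseq size_takel // (hvs k).2.2 leq_addl.
    move=> i; rewrite size_mkseq => hi.
    rewrite nth_mkseq // nth_take // /sigma.
    apply: prefix_nth; first exact: hmono.
    by rewrite (hvs _).2.2 addnS ltnS leq_addl.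
  exact: trT _ _ (prefix_take _ _) ((hvs k).2.1.1).
have bnd: forall j, exists B, forall w, T w -> prefix (rcons v j) w -> size w < B.
  move=> j; case: (classic (T (rcons v j))) => hT; last first.
    by exists 0 => w Tw pw; exfalso; apply: hT; exact: trT _ _ pw Tw.
  have : ~ (forall n, exists w, T w /\ prefix (rcons v j) w /\ size (rcons v j) + n <= size w).
    by move=> hh; apply: (hnot j).
  move/not_all_ex_not => [n hn].
  exists (size (rcons v j) + n) => w Tw pw; rewrite ltnNge; apply/negP => hle.
  by apply: hn; exists w.
have [Bd hBd] := choice' bnd.
have [pk hpk] := choice' (fun N => hv.2 N.+1).
pose child w := nth 0 w (size v).
pose h := fix h k := if k is k'.+1 then maxn (size (pk (h k'))) (Bd (child (pk (h k')))) else 0.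
pose f k := pk (h k).
have F1 : forall k, h k < size (f k).
  move=> k; have := (hpk (h k)).2.2; rewrite /f addnS => /(leq_trans _); apply.
  by rewrite ltnS leq_addl.
have F2a : forall k, size (f k) <= h k.+1 by move=> k; rewrite /= leq_maxl.
have F2b : forall k, Bd (child (f k)) <= h k.+1 by move=> k; rewrite /= leq_maxr.
have F3 : forall l k, l < k -> h l.+1 <= h k.
  move=> l k /subnK <-; elim: (k - l.+1) => [|d IH]; first by rewrite add0n.
  apply: (leq_trans IH); rewrite addSn; apply: ltnW; exact: leq_trans (F1 _) (F2a _).
have F4 : forall l k, l < k -> size (f l) < size (f k).
  move=> l k hlk; apply: leq_ltn_trans (F1 k).
  exact: leq_trans (F2a l) (F3 _ _ hlk).
have F5 : forall l k, l < k -> ~ prefix (f l) (f k).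
  move=> l k hlk hp.
  have pc : prefix (rcons v (child (f l))) (f l).
    apply: prefix_child; first exact: (hpk _).2.1.
    by have := (hpk (h l)).2.2; rewrite addnS => /(leq_trans _); apply; rewrite ltnS leq_addr.
  have := hBd _ _ (hpk (h k)).1 (prefix_trans pc hp).
  rewrite ltnNge => /negP; apply.
  apply: ltnW; apply: leq_trans (F1 k); rewrite ltnS.
  exact: leq_trans (F2b l) (F3 _ _ hlk).
have F6 : forall l k, l < k -> ~ prefix (f k) (f l).
  move=> l k hlk /size_prefix; rewrite leqNgt => /negP; apply; exact: F4.
split => //; exists f; split.
  by move=> k; split; [exact: (hpk _).1 | exact: prefix_trans puv (hpk _).2.1].
move=> k l hkl; case: (ltngtP k l) => [klt|kgt|keq]; last by [].
  split; first exact: F5.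
  split; first exact: F6.
  by move=> e; have := F4 _ _ klt; rewrite e ltnn.
split; first exact: F6.
split; first exact: F5.
by move=> e; have := F4 _ _ kgt; rewrite e ltnn.
Qed.

Lemma sumn_cons' n t : sumn (n :: t) = n + sumn t. Proof. by []. Qed.

Lemma L_min (O : Type) (lt : O -> O -> Prop) : well_founded lt ->
  forall P : O -> Prop, (exists x, P x) -> exists x, P x /\ forall y, lt y x -> ~ P y.
Proof.
move=> wf P [x px]; apply: NNPP => hno.
elim/(well_founded_ind wf): x px => x IH px; apply: hno; exists x; split => // y hy py; exact: IH y hy py.
Qed.

Lemma L_class (O : Type) (lt : O -> O -> Prop) b :
  is_zero lt b \/ (exists g, is_succ lt g b) \/ is_limit lt b.
Proof.
case: (classic (is_zero lt b)) => hz; first by left.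
case: (classic (exists g, is_succ lt g b)) => hs; first by right; left.
right; right; split => // g hg; apply: hs; by exists g.
Qed.

Lemma L_succ_below (O : Type) (lt : O -> O -> Prop) b g : is_wellorder lt ->
  is_limit lt b -> lt g b -> exists d, is_succ lt g d /\ lt d b.
Proof.
move=> [irr [tr [tri wf]]] [_ hl] lgb.
have [d [lgd hmin]] := @L_min _ _ wf (fun d => lt g d) (ex_intro _ b lgb).
have sd : is_succ lt g d by split => // e lge led; exact: hmin e led lge.
exists d; split => //.
case: (tri d b) => [//|[edb|lbd]]; first by subst; exfalso; exact: hl g sd.
by exfalso; exact: hmin b lbd lgb.
Qed.

Lemma Tf_nil (O : Type) (lt : O -> O -> Prop) pi Tf b :
  is_T_family lt pi Tf -> Tf b [::].
Proof.
move=> HT; have [hz [hs hl]] := HT b [::].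
case: (L_class lt b) => [z|[[g sg]|l]].
- by apply/(hz z).
- by apply/(hs g sg); left.
- by apply/(hl l); left.
Qed.

Lemma Diie_tree T : tree T -> tree (Diie T).
Proof.
move=> trT s t pst [Tt [f [Hf Hd]]]; split; first exact: trT _ _ pst Tt.
exists f; split => // k; split; first exact: (Hf k).1.
exact: prefix_trans pst (Hf k).2.
Qed.

Lemma Df_props (O : Type) (lt : O -> O -> Prop) pi Df S :
  is_wellorder lt -> pi_ok lt pi -> is_Diie_family lt Df -> tree S ->
  forall b, (forall s, Df b S s -> S s) /\ tree (Df b S).
Proof.
move=> [irr [tr [tri wf]]] Hpi HD trS b.
elim/(well_founded_ind wf): b => b IH.
case: (L_class lt b) => [z|[[g sg]|l]].
- split.
    move=> s /((HD b S s).1 z) [w [Sw p]]; exact: trS _ _ p Sw.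
  move=> s t pst /((HD b S t).1 z) [w [Sw p]]; apply/((HD b S s).1 z).
  by exists w; split => //; exact: prefix_trans pst p.
- have [IH1 IH2] := IH g sg.1; split.
    by move=> s /((HD b S s).2.1 g sg) [Ds _]; exact: IH1.
  move=> s t pst /((HD b S t).2.1 g sg) Dt; apply/((HD b S s).2.1 g sg).
  exact: Diie_tree IH2 _ _ pst Dt.
- split.
    move=> s /((HD b S s).2.2 l) hall.
    exact: (IH _ ((Hpi b l).1 0)).1 _ (hall _ ((Hpi b l).1 0)).
  move=> s t pst /((HD b S t).2.2 l) hall; apply/((HD b S s).2.2 l) => g lg.
  exact: (IH g lg).2 _ _ pst (hall g lg).
Qed.

Definition Emb (T S : seq nat -> Prop) (u : seq nat) :=
  exists psi : seq nat -> seq nat, psi [::] = u /\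
    (forall t, T t -> S (psi t) /\ size (psi t) = size u + sumn t) /\
    (forall t1 t2, T t1 -> T t2 -> prefix t1 t2 -> prefix (psi t1) (psi t2)).

Lemma assemble (S Tb : seq nat -> Prop) (G : nat -> seq nat -> Prop) u :
  S u -> (forall s, Tb s <-> s = [::] \/ exists n t, s = n :: t /\ G n t) ->
  (forall n, G n [::]) ->
  (forall n, exists w, prefix u w /\ size w = size u + n /\ Emb (G n) S w) -> Emb Tb S u.
Proof.
move=> Su eqT Gnil hw.
have [w hw'] := choice' hw.
have [ps hps] := choice' (fun n => (hw' n).2.2).
exists (fun t => if t is n :: t' then ps n t' else u); split => //; split.
  move=> t /eqT [->|[n [t' [-> Gt]]]] /=; first by rewrite addn0.
  have [e0 [hS hm]] := hps n; have [S' sz] := hS t' Gt; split => //.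
  by rewrite sz (hw' n).2.1 -addnA.
move=> t1 t2 /eqT h1 /eqT h2.
case: h1 => [->|[n1 [t1' [-> G1]]]].
  case: h2 => [->|[n2 [t2' [-> G2]]]] _ /=; first exact: prefix_refl.
  have [e0 [hS hm]] := hps n2.
  apply: prefix_trans (hw' n2).1 _; rewrite -{1}e0; apply: hm => //; exact: prefix0s.
case: h2 => [->|[n2 [t2' [-> G2]]]] /=; first by [].
move/andP => [/eqP e p]; subst n2; exact: (hps n1).2.2.
Qed.

Lemma decompose (S Tb : seq nat -> Prop) (G : nat -> seq nat -> Prop) u :
  Emb Tb S u -> (forall s, Tb s <-> s = [::] \/ exists n t, s = n :: t /\ G n t) ->
  (forall n, G n [::]) ->
  S u /\ forall n, exists w, prefix u w /\ size w = size u + n /\ Emb (G n) S w.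
Proof.
move=> [ps [e0 [hS hm]]] eqT Gnil.
have Tnil : Tb [::] by apply/eqT; left.
have Tn : forall n t, G n t -> Tb (n :: t) by move=> n t g; apply/eqT; right; exists n, t.
split; first by have := (hS _ Tnil).1; rewrite e0.
move=> n; exists (ps [:: n]).
have szn : size (ps [:: n]) = size u + n by rewrite (hS _ (Tn _ _ (Gnil n))).2 /= addn0.
split; first by rewrite -{1}e0; apply: hm => //; exact: Tn.
split => //.
exists (fun t => ps (n :: t)); split => //; split.
  move=> t g; have [S' sz] := hS _ (Tn _ _ g); split => //.
  by rewrite sz szn sumn_cons' addnA.
move=> t1 t2 g1 g2 p; apply: hm; try exact: Tn.
by rewrite /= eqxx p.
Qed.

Lemma D_to_E (O : Type) (lt : O -> O -> Prop) pi Tf Df S :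
  is_wellorder lt -> pi_ok lt pi -> is_T_family lt pi Tf -> is_Diie_family lt Df -> tree S ->
  forall b u, Df b S u -> Emb (Tf b) S u.
Proof.
move=> Hwo Hpi HT HD trS b.
have wf := Hwo.2.2.2.
elim/(well_founded_ind wf): b => b IH u Du.
have [Dsub _] := Df_props Hwo Hpi HD trS b.
case: (L_class lt b) => [z|[[g sg]|l]].
- exists (fun _ => u); split => //; split; last by move=> *; exact: prefix_refl.
  move=> t /((HT b t).1 z) ->; split; [exact: Dsub | by rewrite addn0].
- apply: (@assemble S (Tf b) (fun _ => Tf g)); first exact: Dsub.
    by move=> s; exact: ((HT b s).2.1 g sg).
    by move=> n; exact: Tf_nil HT.
  move=> n.
  have dd := ((HD b S u).2.1 g sg).1 Du.
  have [w [Dw [p sz]]] := Diie_easy (Df_props Hwo Hpi HD trS g).2 dd n.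
  by exists w; split => //; split => //; exact: IH g sg.1 w Dw.
- apply: (@assemble S (Tf b) (fun n => Tf (pi b n))); first exact: Dsub.
    by move=> s; exact: ((HT b s).2.2 l).
    by move=> n; exact: Tf_nil HT.
  move=> n.
  have lgb := (Hpi b l).1 n.
  have [d [sd ld]] := L_succ_below Hwo l lgb.
  have Dd := ((HD b S u).2.2 l).1 Du d ld.
  have dd := ((HD d S u).2.1 _ sd).1 Dd.
  have [w [Dw [p sz]]] := Diie_easy (Df_props Hwo Hpi HD trS _).2 dd n.
  by exists w; split => //; split => //; exact: IH _ lgb w Dw.
Qed.

Lemma E_to_D (O : Type) (lt : O -> O -> Prop) pi Tf Df S :
  is_wellorder lt -> pi_ok lt pi -> is_T_family lt pi Tf -> is_Diie_family lt Df -> tree S ->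
  wfT S -> forall b u, Emb (Tf b) S u -> Df b S u.
Proof.
move=> Hwo Hpi HT HD trS wfS b.
have wf := Hwo.2.2.2.
elim/(well_founded_ind wf): b => b IH u Eu.
case: (L_class lt b) => [z|[[g sg]|l]].
- apply/((HD b S u).1 z); exists u; split; last exact: prefix_refl.
  move: Eu => [ps [e0 [hS _]]].
  by have := (hS [::] (((HT b [::]).1 z).2 erefl)).1; rewrite e0.
- have [Su hd] := decompose Eu (fun s => (HT b s).2.1 g sg) (fun n => Tf_nil _ HT).
  have [Dsub trD] := Df_props Hwo Hpi HD trS g.
  have hw : forall n, exists w, Df g S w /\ prefix u w /\ size u + n <= size w.
    move=> n; have [w [p [sz Ew]]] := hd n.
    by exists w; split; [exact: IH g sg.1 w Ew | rewrite sz].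
  apply/((HD b S u).2.1 g sg); apply: Diie_hard => //.
    by move=> sigma hs; apply: (wfS sigma) => k; exact: Dsub (hs k).
  have [w [Dw [p _]]] := hw 0; exact: trD _ _ p Dw.
- have [Su hd] := decompose Eu (fun s => (HT b s).2.2 l) (fun n => Tf_nil _ HT).
  apply/((HD b S u).2.2 l) => g lg.
  have [n e] := (Hpi b l).2.2 g lg.
  have [w [p [_ Ew]]] := hd n.
  have Dw := IH _ ((Hpi b l).1 n) w Ew.
  rewrite e in Dw; exact: (Df_props Hwo Hpi HD trS g).2 _ _ p Dw.
Qed.
Unset Implicit Arguments.

Theorem proposition6p9
  (Y : Type) (open : (Y -> Prop) -> Prop) (X : Y -> Prop) (C : seq nat -> Y -> Prop)
  (O : Type) (lt : O -> O -> Prop) (pi : O -> nat -> O)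
  (Tf : O -> seq nat -> Prop) (Df : O -> (seq nat -> Prop) -> seq nat -> Prop)
  (lam a a' : O) (n : nat) :
  is_topology open ->
  suslin_scheme_on X C ->
  (forall y, suslinA (clScheme open C) y <-> X y) ->
  is_wellorder lt -> pi_ok lt pi -> is_T_family lt pi Tf -> is_Diie_family lt Df ->
  (is_zero lt lam \/ is_limit lt lam) ->
  iter_succ lt lam n a' ->
  (* (i) alpha = lam + 2n even, alpha' = lam + n *)
  (iter_succ lt lam (2 * n) a ->
     forall y, (RT open C (Tc_even Tf a') y /\ ~ X y) <->
               (~ X y /\ exists s, Df a' (SC open C y) s)) /\
  (* alpha = lam + 2n + 1 odd, alpha' = lam + n *)
  (iter_succ lt lam (2 * n).+1 a ->
     (* (ii) *)
     (forall y, (RT open C (Tc_odd Tf a' 1) y /\ ~ X y) <->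
                (~ X y /\ Df a' (SC open C y) [::] /\
                 exists s, Df a' (SC open C y) s /\ s <> [::])) /\
     (* (iii) *)
     (forall i y, (RT open C (Tc_odd Tf a' i) y /\ ~ X y) <->
                  (~ X y /\ exists s, Df a' (SC open C y) s /\ size s = i))).
Proof.
move=> _ HC HA Hwo Hpi HT HD _ _.
have trS : forall y, tree (SC open C y).
  move=> y s t pst hc U oU Uy; have [z [Uz Ctz]] := hc U oU Uy.
  by exists z; split => //; exact: HC.2.1 s t pst z Ctz.
have wfS : forall y, ~ X y -> wfT (SC open C y).
  move=> y nX sigma hs; apply: nX; apply/HA; exists sigma => k; exact: hs k.
have Tnil := fun b => Tf_nil b HT.
have odd_lemma : forall i y, (RT open C (Tc_odd Tf a' i) y /\ ~ X y) <->
                  (~ X y /\ exists s, Df a' (SC open C y) s /\ size s = i).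
  move=> i y; split.
    move=> [[c0 [phi [[hm hsz] hphi]]] nX]; split => //.
    have Ti_n : forall t, Tf a' t -> Tc_odd Tf a' i (i :: t) by move=> t g; right; exists t.
    exists (phi [:: i]); split; last by rewrite (hsz _ (Ti_n _ (Tnil a'))) /= addn0.
    apply: (E_to_D Hwo Hpi HT HD (trS y) (wfS y nX)).
    exists (fun t => phi (i :: t)); split => //; split.
      move=> t Tt; split; first exact: hphi _ (Ti_n _ Tt).
      by rewrite (hsz _ (Ti_n _ Tt)) (hsz _ (Ti_n _ (Tnil a'))) /= addn0.
    move=> t1 t2 g1 g2 p; apply: hm; try exact: Ti_n.
    by rewrite /= eqxx p.
  move=> [nX [s [Ds sz]]].
  have [ps [e0 [hS hm]]] := D_to_E Hwo Hpi HT HD (trS y) Ds.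
  have Sn : SC open C y [::].
    by apply: (trS y) _ _ (prefix0s s) _; have := (hS _ (Tnil a')).1; rewrite e0.
  split => //; split; first exact: Sn.
  exists (fun t => if t is _ :: t' then ps t' else [::]); split; last first.
    by move=> t [->|[t' [-> g]]] /=; [exact: Sn | exact: (hS t' g).1].
  split.
    move=> t1 t2 h1 h2; case: h1 => [->|[t1' [-> g1]]] p; first by rewrite prefix0s.
    case: h2 p => [->|[t2' [-> g2]]] /=; first by [].
    by move/andP=> [_ p]; exact: hm.
  by move=> t [->|[t' [-> g]]] //=; rewrite (hS t' g).2 sz.
split.
  move=> _ y; split.
    move=> [[c0 [phi [[hm hsz] hphi]]] nX]; split => //; exists [::].
    apply: (E_to_D Hwo Hpi HT HD (trS y) (wfS y nX)).
    exists phi; split; first by apply/size0nil; rewrite (hsz _ (Tnil a')).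
    split => //; move=> t Tt; split; first exact: hphi.
    by rewrite hsz.
  move=> [nX [s Ds]].
  have D0 : Df a' (SC open C y) [::].
    exact: (Df_props Hwo Hpi HD (trS y) a').2 _ _ (prefix0s s) Ds.
  have [ps [e0 [hS hm]]] := D_to_E Hwo Hpi HT HD (trS y) D0.
  split => //; split.
    by have := (hS _ (Tnil a')).1; rewrite e0.
  exists ps; split; first split => //.
    by move=> t Tt; rewrite (hS t Tt).2.
  by move=> t Tt; exact: (hS t Tt).1.
move=> _; split; last exact: odd_lemma.
move=> y; rewrite odd_lemma; split.
  move=> [nX [s [Ds sz]]]; split => //; split.
    exact: (Df_props Hwo Hpi HD (trS y) a').2 _ _ (prefix0s s) Ds.
  by exists s; split => // e; rewrite e in sz.
move=> [nX [_ [s [Ds ne]]]]; split => //; exists (take 1 s); split.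
  exact: (Df_props Hwo Hpi HD (trS y) a').2 _ _ (prefix_take _ _) Ds.
by case: s ne Ds => [|x s'] //= _ _; rewrite take0.
Qed.
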